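(* In the group \(\mathcal{G}\) described below, if \(i,j,k\in\{1,\dots,7\}\) are collinear points of the Fano plane, then \(s_is_js_k=1\).
   Context: Let \(\mathcal{G}=\langle x,y,t \mid x^7, y^2, (xy)^3, [x,y]^4, t^2, [t^{x^2},yx^{-1}], [t,y], (yt^{x^2})^5, (xyx^2t^x)^5, (xt)^8\rangle\), with \(a^g=g^{-1}ag\), \([a,b]=a^{-1}b^{-1}ab\). Let \(\mathcal{N}=\langle x,y\rangle\le\mathcal{G}\); it acts on \(\{1,\dots,14\}\) on the right via \(x\mapsto(1,2,3,4,5,6,7)(8,9,10,11,12,13,14)\), \(y\mapsto(1,12)(2,3)(4,11)(5,8)(6,13)(9,10)\). Put \(t_7=t\) and \(t_i=t^g\) for any \(g\in\mathcal{N}\) mapping \(7\) to \(i\); indices are taken modulo 14, and \(s_i=t_it_{i+7}\). The Fano plane has points \(1,\dots,7\) and lines \(\{7,1,5\},\{1,2,6\},\{2,3,7\},\{3,4,1\},\{4,5,2\},\{5,6,3\},\{6,7,4\}\); ''collinear'' means the three points are distinct and lie on one of these lines. *)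

(* Defs.v *)
From mathcomp Require Import all_boot.
Set Implicit Arguments. Unset Strict Implicit. Unset Printing Implicit Defensive.

Record group := Group {
  carrier :> Type;
  gmul : carrier -> carrier -> carrier;
  ginv : carrier -> carrier;
  gone : carrier;
  gmulA : forall a b c, gmul a (gmul b c) = gmul (gmul a b) c;
  gmul1g : forall a, gmul gone a = a;
  gmulVg : forall a, gmul (ginv a) a = gone
}.

Section Ops.
Variable G : group.
Fixpoint gpow (a : G) (n : nat) : G :=
  if n is n'.+1 then gmul a (gpow a n') else gone G.
Definition gconj (a g : G) : G := gmul (gmul (ginv g) a) g.
Definition gcomm (a b : G) : G :=
  gmul (gmul (gmul (ginv a) (ginv b)) a) b.

(* Positive words in the generators x (false) and y (true) of N; since x
   and y have finite order, every element of N is represented by one. *)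
Fixpoint evalw (x y : G) (w : seq bool) : G :=
  match w with
  | [::] => gone G
  | b :: w' => gmul (if b then y else x) (evalw x y w')
  end.
End Ops.

Definition GG_relations (G : group) (x y t : G) : Prop :=
  let m := @gmul G in
  let e := gone G in
  gpow x 7 = e /\ gpow y 2 = e /\ gpow (m x y) 3 = e /\
  gpow (gcomm x y) 4 = e /\ gpow t 2 = e /\
  gcomm (gconj t (m x x)) (m y (ginv x)) = e /\
  gcomm t y = e /\
  gpow (m y (gconj t (m x x))) 5 = e /\
  gpow (m (m (m x y) (m x x)) (gconj t x)) 5 = e /\
  gpow (m x t) 8 = e.

(* Action of N on {1,...,14} (points outside this range are fixed). *)
Definition act_x (p : nat) : nat :=
  if p == 7 then 1 else if p == 14 then 8
  else if (1 <= p <= 13) then p.+1 else p.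

Definition act_y (p : nat) : nat :=
  match p with
  | 1 => 12 | 12 => 1 | 2 => 3 | 3 => 2 | 4 => 11 | 11 => 4
  | 5 => 8 | 8 => 5 | 6 => 13 | 13 => 6 | 9 => 10 | 10 => 9
  | _ => p
  end.

(* Right action: p^(w_1 w_2 ... w_n) = (...(p^w_1)^w_2 ...)^w_n. *)
Fixpoint actw (p : nat) (w : seq bool) : nat :=
  match w with
  | [::] => p
  | b :: w' => actw (if b then act_y p else act_x p) w'
  end.

Definition fano_lines : seq (seq nat) :=
  [:: [:: 7; 1; 5]; [:: 1; 2; 6]; [:: 2; 3; 7]; [:: 3; 4; 1];
      [:: 4; 5; 2]; [:: 5; 6; 3]; [:: 6; 7; 4]].

Definition collinear (i j k : nat) : bool :=
  [&& i != j, j != k, i != k &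
   has (fun L => [&& i \in L, j \in L & k \in L]) fano_lines].

(* Main.v *)
Require Import Defs.
From mathcomp Require Import all_boot.
Set Implicit Arguments. Unset Strict Implicit. Unset Printing Implicit Defensive.

(* Proof strategy: the subgroup N = <x,y> is handled by a verified Knuth-Bendix
   rewriting system (checked by reflection); the conjugates t_a of t are handled
   by a normal form for words in t_a and N; derived relations are proved by
   reflectively checked certificates (products of conjugates of relators). *)

Module Core.

Section Basic.
Variable G : group.
Local Notation "a * b" := (gmul a b).
Local Notation e := (gone G).

Lemma GmulV (a : G) : a * ginv a = e.
Proof.
have H1 : ginv (ginv a) * ginv a = e by apply: gmulVg.
have E : ginv (ginv a) * (ginv a * (a * ginv a)) = a * ginv a.
  by rewrite gmulA H1 gmul1g.
have F : ginv (ginv a) * (ginv a * (a * ginv a)) = e.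
  by rewrite (gmulA (ginv a) a) gmulVg gmul1g H1.
by rewrite -E F.
Qed.

Lemma Gmul1 (a : G) : a * e = a.
Proof. by rewrite -(gmulVg a) gmulA GmulV gmul1g. Qed.

Lemma GmulK (a b : G) : ginv a * (a * b) = b.
Proof. by rewrite gmulA gmulVg gmul1g. Qed.

Lemma GmulKV (a b : G) : a * (ginv a * b) = b.
Proof. by rewrite gmulA GmulV gmul1g. Qed.

Lemma GmulI (a b c : G) : a * b = a * c -> b = c.
Proof. by move=> H; rewrite -(GmulK a b) H GmulK. Qed.

Lemma Ginv_uniq (a b : G) : a * b = e -> ginv a = b.
Proof. by move=> H; apply: (@GmulI a); rewrite GmulV H. Qed.

Lemma GinvM (a b : G) : ginv (a * b) = ginv b * ginv a.
Proof.
apply: Ginv_uniq; by rewrite -gmulA (gmulA b) GmulV gmul1g GmulV.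
Qed.

Lemma GinvK (a : G) : ginv (ginv a) = a.
Proof. by apply: Ginv_uniq; apply: gmulVg. Qed.

Lemma Ginv1 : ginv e = e.
Proof. by apply: Ginv_uniq; rewrite Gmul1. Qed.
End Basic.

End Core.
Import Core.

Module NW.

Fixpoint rw1 (l r w : seq nat) {struct w} : option (seq nat) :=
  if take (size l) w == l then Some (r ++ drop (size l) w) else
  if w is c :: w' then (if rw1 l r w' is Some v then Some (c :: v) else None)
  else None.

Fixpoint rwl (rs : seq (seq nat * seq nat)) (w : seq nat) : option (seq nat) :=
  if rs is (l, r) :: rs' then
    (if rw1 l r w is Some v then Some v else rwl rs' w)
  else None.

Fixpoint red (n : nat) (rs : seq (seq nat * seq nat)) (w : seq nat) : seq nat :=
  if n is n'.+1 then (if rwl rs w is Some v then red n' rs v else w) else w.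

Definition axN : seq (seq nat) :=
  [:: [:: 0; 1]; [:: 1; 0]; [:: 2; 2]; nseq 7 0; flatten (nseq 3 [:: 0; 2]);
      flatten (nseq 4 [:: 1; 2; 0; 2])].

Definition pairof (rs : seq (seq nat * seq nat)) (c : nat * nat * nat * nat) :
  seq nat * seq nat :=
  let: (kind, i, j, k) := c in
  if kind == 0 then (nth [::] axN i, [::]) else
  let: (l1, r1) := nth ([::], [::]) rs i in
  let: (l2, r2) := nth ([::], [::]) rs j in
  (r1 ++ drop k l2, take (size l1 - k) l1 ++ r2).

Definition pair_ok (rs : seq (seq nat * seq nat)) (c : nat * nat * nat * nat) : bool :=
  let: (kind, i, j, k) := c in
  (kind == 0) ||
  (drop (size (nth ([::], [::]) rs i).1 - k) (nth ([::], [::]) rs i).1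
    == take k (nth ([::], [::]) rs j).1).

Definition FUEL := 400.

Definition rule_ok (rs : seq (seq nat * seq nat)) (k : nat) (c : nat * nat * nat * nat)
  (lr : seq nat * seq nat) : bool :=
  let rk := take k rs in
  let ab := pairof rk c in
  pair_ok rk c &&
  (((red FUEL rk ab.1 == lr.1) && (red FUEL rk ab.2 == lr.2)) ||
   ((red FUEL rk ab.1 == lr.2) && (red FUEL rk ab.2 == lr.1))).

Definition kb_ok (rs : seq (seq nat * seq nat)) (cs : seq (nat * nat * nat * nat)) : bool :=
  all (fun k => rule_ok rs k (nth (0,0,0,0) cs k) (nth ([::], [::]) rs k))
      (iota 0 (size rs)).

Section NW.
Variable G : group.
Variables x y : G.
Local Notation "a * b" := (gmul a b).
Local Notation e := (gone G).

Definition evl (c : nat) : G := if c == 0 then x else if c == 1 then ginv x else y.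
Definition evN (w : seq nat) : G := foldr (fun c r => evl c * r) e w.

Lemma evN_cat u v : evN (u ++ v) = evN u * evN v.
Proof. by elim: u => [|c u IH] /=; rewrite ?gmul1g // IH gmulA. Qed.

Definition rsound (rs : seq (seq nat * seq nat)) :=
  forall l r, (l, r) \in rs -> evN l = evN r.

Lemma rw1_sound l r w v : evN l = evN r -> rw1 l r w = Some v -> evN v = evN w.
Proof.
move=> Hlr; elim: w v => [|c w IH] v /=.
  case: ifP => // /eqP Ht [<-].
  have El : l = [::] by case: l Ht {Hlr} => //.
  by rewrite cats0 -Hlr El.
case: ifP => [/eqP Ht [<-]|_].
  rewrite evN_cat.
  have -> : evl c * evN w = evN (c :: w) by [].
  by rewrite -{2}(cat_take_drop (size l) (c :: w)) evN_cat Ht Hlr.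
case E: (rw1 l r w) => [u|] // [<-] /=; by rewrite (IH u).
Qed.

Lemma rwl_sound rs w v : rsound rs -> rwl rs w = Some v -> evN v = evN w.
Proof.
elim: rs => [|[l r] rs IH] //= Hs.
case E: (rw1 l r w) => [u|].
  move=> [<-]; apply: (rw1_sound _ E); apply: Hs; exact: mem_head.
apply: IH => l' r' H; apply: Hs; by rewrite in_cons H orbT.
Qed.

Lemma red_sound n rs w : rsound rs -> evN (red n rs w) = evN w.
Proof.
move=> Hs; elim: n w => [|n IH] w //=.
case E: (rwl rs w) => [u|] //; by rewrite IH (rwl_sound Hs E).
Qed.

Hypothesis axN_sound : forall a, a \in axN -> evN a = e.

Lemma pair_sound rs c : rsound rs -> pair_ok rs c ->
  evN (pairof rs c).1 = evN (pairof rs c).2.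
Proof.
move=> Hs; case: c => [[[kind i] j] k] /=.
case: ifP => Hk.
  move=> _ /=; case: (ltnP i (size axN)) => Hi.
    by apply: axN_sound; apply: mem_nth.
  by rewrite nth_default.
move=> /= Hov.
have snd : forall i, evN (nth ([::], [::]) rs i).1 = evN (nth ([::], [::]) rs i).2.
  move=> i'; case: (ltnP i' (size rs)) => Hi.
    apply: Hs; rewrite -surjective_pairing; exact: mem_nth.
  by rewrite nth_default.
move: Hov (snd i) (snd j).
case: (nth ([::], [::]) rs i) => l1 r1; case: (nth ([::], [::]) rs j) => l2 r2 /=.
move=> /eqP Hov H1 H2.
rewrite !evN_cat -H1 -H2.
rewrite -{1}(cat_take_drop (size l1 - k) l1) -{2}(cat_take_drop k l2) Hov.
by rewrite !evN_cat gmulA.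
Qed.

Lemma kb_sound rs cs : kb_ok rs cs -> rsound rs.
Proof.
move=> /allP Hok.
have key : forall n k, k < n -> k < size rs ->
    evN (nth ([::], [::]) rs k).1 = evN (nth ([::], [::]) rs k).2.
  elim=> [|n IH] k // Hkn Hk.
  have Hsk : rsound (take k rs).
    move=> l r /(nthP ([::], [::])) [i Hi Ei].
    rewrite size_take Hk in Hi.
    rewrite nth_take // in Ei.
    have := IH i (leq_trans Hi Hkn) (ltn_trans Hi Hk); by rewrite Ei.
  have := Hok k; rewrite mem_iota add0n => /(_ Hk).
  rewrite /rule_ok => /andP [Hp Hr].
  have Hpair := pair_sound Hsk Hp.
  move: Hr; case: (nth ([::], [::]) rs k) => l r.
  case/orP => /andP [/eqP E1 /eqP E2].
    by rewrite -E1 -E2 !red_sound.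
  by rewrite -E1 -E2 !red_sound.
move=> l r /(nthP ([::], [::])) [i Hi Ei].
have := key i.+1 i (ltnSn i) Hi; by rewrite Ei.
Qed.

End NW.

End NW.
Import NW.

Module TL.

Definition act_xi (p : nat) : nat :=
  if p == 1 then 7 else if p == 8 then 14
  else if (2 <= p <= 14) then p.-1 else p.

Definition actL (c p : nat) : nat :=
  if c == 0 then act_x p else if c == 1 then act_xi p else act_y p.

Definition cinv (c : nat) : nat := if c == 0 then 1 else if c == 1 then 0 else c.

Definition inr (a : nat) : bool := (0 < a) && (a < 15).

Inductive lt := Tl of nat | Nl of nat.

Definition okl (l : lt) : bool := match l with Tl a => inr a | Nl c => true end.

Definition norm_cons (l : lt) (st : seq nat * seq nat) : seq nat * seq nat :=
  match l with
  | Tl a => match st.1 with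
            | b :: L' => if a == b then (L', st.2) else (a :: st.1, st.2)
            | [::] => ([:: a], st.2)
            end
  | Nl c => (map (actL (cinv c)) st.1, c :: st.2)
  end.

Definition norm (w : seq lt) := foldr norm_cons ([::], [::]) w.

Definition nf (rs : seq (seq nat * seq nat)) (w : seq lt) :=
  let st := norm w in (st.1, red FUEL rs st.2).

Definition denorm (st : seq nat * seq nat) : seq lt := map Tl st.1 ++ map Nl st.2.

Definition invl (l : lt) : lt := match l with Tl a => Tl a | Nl c => Nl (cinv c) end.
Definition invw (w : seq lt) : seq lt := rev (map invl w).

Inductive stp := Ins of seq lt & nat & bool | Cnj of seq lt | Inv.

Definition step (rs : seq (seq nat * seq nat)) (rels : seq (seq lt))
  (st : seq nat * seq nat) (c : stp) : seq nat * seq nat :=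
  match c with
  | Ins u r s =>
      let R := nth [::] rels r in
      let Rs := if s then R else invw R in
      nf rs (u ++ Rs ++ invw u ++ denorm st)
  | Cnj v => nf rs (invw v ++ denorm st ++ v)
  | Inv => nf rs (invw (denorm st))
  end.

Definition okstp (c : stp) : bool :=
  match c with Ins u _ _ => all okl u | Cnj v => all okl v | Inv => true end.

Definition cert_ok (rs : seq (seq nat * seq nat)) (rels : seq (seq lt)) (w : seq lt)
  (cs : seq stp) : bool :=
  all okstp cs && (foldl (step rs rels) (nf rs w) cs == ([::], [::])).

Definition ok_actL : bool :=
  all (fun c => all (fun a => inr (actL c a) && (actL (cinv c) (actL c a) == a))
                    (iota 1 14)) (iota 0 3).

Lemma ok_actL_true : ok_actL = true. Proof. by []. Qed.

Lemma actL_inr c a : c < 3 -> inr a -> inr (actL c a).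
Proof.
move=> Hc Ha; have := ok_actL_true; rewrite /ok_actL => /allP /(_ c).
rewrite mem_iota add0n => /(_ Hc) /allP /(_ a).
have Ha' : a \in iota 1 14 by rewrite mem_iota; case/andP: Ha => H1 H2; rewrite H1 add1n ltnS -ltnS H2.
by move=> /(_ Ha') /andP [].
Qed.

Lemma actLK c a : c < 3 -> inr a -> actL (cinv c) (actL c a) = a.
Proof.
move=> Hc Ha; have := ok_actL_true; rewrite /ok_actL => /allP /(_ c).
rewrite mem_iota add0n => /(_ Hc) /allP /(_ a).
have Ha' : a \in iota 1 14 by rewrite mem_iota; case/andP: Ha => H1 H2; rewrite H1 add1n ltnS -ltnS H2.
by move=> /(_ Ha') /andP [_ /eqP].
Qed.

End TL.
Import TL.

Module TS.

Section TS.
Variable G : group.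
Variables x y t : G.
Local Notation "a * b" := (gmul a b).
Local Notation e := (gone G).
Local Notation evN := (evN x y).
Local Notation evl := (evl x y).

Variable cw : nat -> seq nat.
Definition tt (a : nat) : G := gconj t (evN (cw a)).
Definition evT (L : seq nat) : G := foldr (fun a r => tt a * r) e L.
Definition evlt (l : lt) : G := match l with Tl a => tt a | Nl c => evl c end.
Definition evW (w : seq lt) : G := foldr (fun l r => evlt l * r) e w.

Variable rs : seq (seq nat * seq nat).
Hypothesis Hrs : rsound x y rs.
Hypothesis Ht2 : t * t = e.
Hypothesis Tlem : forall c a, c < 3 -> inr a -> gconj (tt a) (evl c) = tt (actL c a).

Lemma evW_cat u v : evW (u ++ v) = evW u * evW v.
Proof. by elim: u => [|c u IH] /=; rewrite ?gmul1g // IH gmulA. Qed.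

Lemma evT_cat u v : evT (u ++ v) = evT u * evT v.
Proof. by elim: u => [|c u IH] /=; rewrite ?gmul1g // IH gmulA. Qed.

Lemma gconj_inv2 (a g : G) : a * a = e -> gconj a g * gconj a g = e.
Proof.
move=> H; rewrite /gconj -!gmulA (gmulA g) GmulV gmul1g.
by rewrite (gmulA a) H gmul1g gmulVg.
Qed.

Lemma tt2 a : tt a * tt a = e.
Proof. exact: gconj_inv2. Qed.

Hypothesis Hy2 : y * y = e.

Lemma evl_cinv c : c < 3 -> evl (cinv c) = ginv (evl c).
Proof.
case: c => [|[|[|c]]] // _; rewrite /evl /cinv /= ?GinvK //.
by apply: esym; apply: Ginv_uniq.
Qed.

Lemma swap c b : inr b -> evl c * tt b = tt (actL (cinv c) b) * evl c.
Proof.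
move=> Hb.
have [c' [Hc' [E1 E2]]] : exists c', [/\ c' < 3, evl c = evl c' &
    forall p, actL (cinv c) p = actL (cinv c') p].
  case: c => [|[|[|c]]]; [exists 0 | exists 1 | exists 2 | exists 2]; by [].
rewrite E1 E2.
have Hc'' : cinv c' < 3 by case: c' Hc' {E1 E2} => [|[|[|d]]].
have := Tlem Hc'' Hb; rewrite /gconj evl_cinv // GinvK => <-.
by rewrite -gmulA gmulVg Gmul1.
Qed.

Lemma swapT c L : all inr L ->
  evl c * evT L = evT (map (actL (cinv c)) L) * evl c.
Proof.
elim: L => [|b L IH] /=; first by rewrite Gmul1 gmul1g.
case/andP => Hb HL; rewrite gmulA swap // -!gmulA IH //.
Qed.

Definition okw (w : seq lt) := all okl w.

Lemma norm_sound w : okw w ->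
  evW w = evT (norm w).1 * evN (norm w).2 /\ all inr (norm w).1.
Proof.
elim: w => [|l w IH] /=; first by rewrite Gmul1.
case/andP => Hl /IH [E HL]; rewrite E.
case: l Hl => [a|c] /= Hl.
  case: (norm w) HL => [[|b L'] n] /= HL.
    by rewrite Hl gmul1g Gmul1.
  case: ifP => [/eqP Eab|_] /=.
    subst b; rewrite gmulA gmulA tt2 gmul1g; by case/andP: HL.
  by rewrite Hl HL !gmulA.
split.
  by rewrite gmulA swapT // gmulA.
rewrite all_map; apply/allP => b Hb /=.
have [c' [Hc' E2]] : exists c', c' < 3 /\ forall p, actL (cinv c) p = actL c' p.
  case: c {Hl} => [|[|[|c]]]; [exists 1 | exists 0 | exists 2 | exists 2]; by [].
rewrite E2; apply: actL_inr => //.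
exact: (allP HL).
Qed.
Lemma evN_map w : evW (map Nl w) = evN w.
Proof. by elim: w => //= c w ->. Qed.

Lemma evT_map L : evW (map Tl L) = evT L.
Proof. by elim: L => //= c w ->. Qed.

Lemma okw_cat u v : okw (u ++ v) = okw u && okw v.
Proof. exact: all_cat. Qed.

Lemma nf_sound w : okw w -> evW (denorm (nf rs w)) = evW w /\ okw (denorm (nf rs w)).
Proof.
move=> H; have [E HL] := norm_sound H.
rewrite /denorm /nf evW_cat evT_map evN_map red_sound // E; split => //.
rewrite okw_cat; apply/andP; split.
  by rewrite /okw all_map; apply/allP => a Ha /=; apply: (allP HL).
by rewrite /okw all_map; apply/allP.
Qed.

Lemma evl_cinv' c : evl (cinv c) = ginv (evl c).
Proof.
case: c => [|[|[|c]]]; rewrite /evl /cinv /= ?GinvK //;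
  by apply: esym; apply: Ginv_uniq.
Qed.

Lemma evW_inv w : evW (invw w) = ginv (evW w).
Proof.
elim: w => [|l w IH]; first by rewrite /= Ginv1.
rewrite /invw map_cons rev_cons -cats1 evW_cat -/(invw w) IH /= Gmul1 GinvM.
congr (_ * _); case: l => [a|c] /=.
  by apply: esym; apply: Ginv_uniq; apply: tt2.
exact: evl_cinv'.
Qed.

Lemma okw_inv w : okw w -> okw (invw w).
Proof.
move=> H; rewrite /okw /invw all_rev all_map; apply: sub_all H; by case.
Qed.

Variable rels : seq (seq lt).
Hypothesis Hrels : forall r, okw (nth [::] rels r) /\ evW (nth [::] rels r) = e.

Lemma step_sound st c : okw (denorm st) -> okstp c ->
  okw (denorm (step rs rels st c)) /\
  (evW (denorm (step rs rels st c)) = e -> evW (denorm st) = e).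
Proof.
case: c => [u r s|v|] /= Hst Hu.
- change (is_true (okw u)) in Hu.
  have [Rok Re] := Hrels r.
  set R := nth [::] rels r.
  have HRs : okw (if s then R else invw R) /\ evW (if s then R else invw R) = e.
    by case: s; split => //; [apply: okw_inv | rewrite evW_inv Re Ginv1].
  case: HRs => HRo HRe.
  have Hok : okw (u ++ (if s then R else invw R) ++ invw u ++ denorm st).
    by rewrite okw_cat Hu okw_cat HRo okw_cat (okw_inv Hu) Hst.
  have [E1 E2] := nf_sound Hok; split => //.
  by rewrite E1 !evW_cat HRe gmul1g evW_inv gmulA GmulV gmul1g.
- change (is_true (okw v)) in Hu.
  have Hok : okw (invw v ++ denorm st ++ v).
    by rewrite okw_cat (okw_inv Hu) okw_cat Hst.
  have [E1 E2] := nf_sound Hok; split => //.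
  rewrite E1 evW_cat evW_cat evW_inv => H.
  have H2 : ginv (evW v) * (evW (denorm st) * evW v) * ginv (evW v) = ginv (evW v).
    by rewrite H gmul1g.
  move: H2; rewrite -!gmulA GmulV Gmul1 => H3.
  by apply: (@GmulI _ (ginv (evW v))); rewrite H3 Gmul1.
- have Hok : okw (invw (denorm st)) by apply: okw_inv.
  have [E1 E2] := nf_sound Hok; split => //.
  rewrite E1 evW_inv => H.
  by rewrite -(GinvK (evW (denorm st))) H Ginv1.
Qed.

Lemma cert_sound w cs : okw w -> cert_ok rs rels w cs -> evW w = e.
Proof.
move=> Hw /andP [Hcs /eqP Hfin].
have [E0 O0] := nf_sound Hw.
suff : forall st, (evW (denorm st) = e -> evW w = e) -> okw (denorm st) ->
    all okstp cs ->
    (evW (denorm (foldl (step rs rels) st cs)) = e -> evW w = e).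
  move=> /(_ _ (fun H => etrans (esym E0) H) O0 Hcs); rewrite Hfin; by apply.
elim: cs {Hcs Hfin} => [|c cs IH] st Est Ost //= /andP [Hc Hcs].
have [O1 E1] := step_sound Ost Hc.
apply: IH => //; move=> H; apply: Est; exact: E1.
Qed.
End TS.

End TS.
Import TS.

Definition KBR : seq (seq nat * seq nat) := [::
  ([::0;1], [::]);
  ([::1;0], [::]);
  ([::2;2], [::]);
  ([::0;0;0;0;0;0;0], [::]);
  ([::0;2;0;2;0;2], [::]);
  ([::1;2;0;2;1;2;0;2;1;2;0;2;1;2;0;2], [::]);
  ([::2;0;2;1;2;0;2;1;2;0;2;1;2;0;2], [::0]);
  ([::0;0;0;0;0;0], [::1]);
  ([::2;0;2;0;2], [::1]);
  ([::0;2;0;2;0], [::2]);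
  ([::1;2;0;2;1;2;0;2;1;2;0;2;1;2;0], [::2]);
  ([::1;2;0;2;1;2;0;2;1;2;0;2;1;2], [::0;2;0;2]);
  ([::2;0;2;1;2;0;2;1;2;0;2;1;2], [::0;0;2;0;2]);
  ([::0;0;0;0;0], [::1;1]);
  ([::2;0;2;0], [::1;2]);
  ([::0;2;1;2;0;2;1;2;0;2;1;2;0;2], [::2;0]);
  ([::0;2;0;2], [::2;1]);
  ([::2;0;2;1;2;0;2;1;2;0;2;1;1], [::0;0;2]);
  ([::2;0;2;1;2;0;2;1;2;0;2;1], [::0;0;2;0]);
  ([::2;1;2;0;2;1;2;0;2;1;2;0;2], [::1;2;0]);
  ([::1;1;2;0;2;1;2;0;2;1;2;0;2], [::2;0;0]);
  ([::1;2;0;2;1;2;0;2;1;2;0;2], [::0;2;0;0]);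
  ([::2;0;2;1;2;0;2;1;2;0;2], [::0;0;2;0;0]);
  ([::0;0;0;0], [::1;1;1]);
  ([::2;0;2], [::1;2;1]);
  ([::2;1;2], [::0;2;0]);
  ([::0;2;1;1;2;1;1;1;2;1;1], [::2;0;0;2;0]);
  ([::1;1;1;2;1;1;1;2;1;1], [::2;0;0;0;2;0]);
  ([::1;1;2;1;1;1;2;1;1], [::0;2;0;0;0;2;0]);
  ([::1;2;1;1;1;2;1;1], [::0;0;2;0;0;0;2;0]);
  ([::1;1;1;1], [::0;0;0]);
  ([::2;0;0;2;0], [::1;2;1;1;2]);
  ([::2;1;1;2;1], [::0;2;0;0;2]);
  ([::1;1;2;1;1;1;2;1], [::0;2;0;0;0;2;0;0]);
  ([::2;1;1;2;0;0;2;1;1], [::1;1;2;0;0;2;1;1;2]);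
  ([::0;0;0;2;0;0;0;2;0], [::2;1;1;1;2;1;1]);
  ([::0;0;2;0;0;0;2;0;0], [::1;2;1;1;1;2;1]);
  ([::1;2;1;1;1;2;0;0;2;1;1], [::0;2;0;0;0;2;1;1;2]);
  ([::2;1;1;1;2;0;0;2;1;1;2], [::0;0;2;0;0;0;2;1;1]);
  ([::0;0;2;0;0;0;2;1;1], [::1;2;1;1;1;2;0;0]);
  ([::1;2;1;1;1;2;0;0;0], [::0;0;2;0;0;0;2;1]);
  ([::1;2;1;1;2;0;0;2], [::0;0;2;0;0;2;1;1]);
  ([::1;2;0;0;2;1;1;2;0], [::0;2;1;1;2;0;0;2;1]);
  ([::0;0;0;2;1;1;1;2;1;1], [::1;2;0;0;0;2;0]);
  ([::1;1;2;0;0;0;2;0;0], [::0;0;2;1;1;1;2;1]);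
  ([::0;0;0;2;1;1;1;2;1], [::1;2;0;0;0;2;0;0]);
  ([::1;2;1;1;2;0;0;0], [::2;0;0;2;1;1;1]);
  ([::0;2;0;0;0;2;0;0;2;1], [::1;1;2;1;1;2]);
  ([::0;2;0;0;2;1;1;1], [::2;1;1;2;0;0;0]);
  ([::2;0;0;0;2;1;1;2;0], [::0;2;1;1;1;2;0;0;2]);
  ([::0;2;0;0;0;2;0;0;2], [::1;1;2;1;1;2;0]);
  ([::2;0;0;0;2;0;0;2;1;1;2], [::1;1;2;0;0]);
  ([::0;2;0;0;0;2;0;0;0], [::1;1;2;1;1;1;2]);
  ([::2;1;1;1;2;1;1;2;0], [::0;0;0;2;0;0;2]);
  ([::1;1;2;0;0;2;1;1;1], [::2;0;0;2;1;1;2;0]);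
  ([::2;1;1;1;2;0;0;2;1;1], [::1;2;1;1;1;2;0;0;2]);
  ([::0;0;0;2;0;0;0;2;1], [::2;1;1;1;2;0;0;0]);
  ([::0;0;0;2;0;0;2;1;1], [::2;1;1;2;0;0;2]);
  ([::0;0;2;1;1;2;0;0;2;1], [::2;0;0;2;1;1;2;0]);
  ([::0;2;0;0;2;1;1;2;0], [::1;2;0;0;2;1;1;1]);
  ([::1;1;2;1;1;1;2;0;0], [::0;2;0;0;0;2;1;1]);
  ([::2;0;0;0;2;0;0;2], [::1;1;1;2;1;1;2;0]);
  ([::2;0;0;0;2;0;0;0], [::1;1;1;2;1;1;1;2]);
  ([::0;0;2;1;1;1;2;1;1], [::1;1;2;0;0;0;2;0]);
  ([::1;1;1;2;0;0;0;2;0], [::0;2;1;1;1;2;1;1]);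
  ([::1;1;2;0;0;0;2;1;1], [::0;0;2;1;1;1;2;0;0]);
  ([::0;0;0;2;1;1;2;0;0;0], [::0;2;1;1;2;0;0;2;1]);
  ([::2;0;0;2;1;1;1;2;0;0;2], [::0;2;1;1;2;0;0;2;1]);
  ([::1;1;2;1;1;2;0;0], [::0;2;0;0;2;1;1;2]);
  ([::1;2;1;1;1;2;0;0;2;1], [::0;0;2;1;1;1;2;0;0;2]);
  ([::2;1;1;1;2;1;1;2], [::0;0;0;2;0;0;2;1]);
  ([::0;0;0;2;1;1;1;2;0;0;0], [::1;2;0;0;0;2;1]);
  ([::0;0;0;2;1;1;2;0;0;2], [::1;2;0;0;2;1;1]);
  ([::0;0;2;1;1;2;0;0;0], [::2;1;1;2;0;0;2;1]);
  ([::1;1;1;2;0;0;2;1;1;2], [::0;2;1;1;2;0;0]);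
  ([::2;0;0;0;2;1;1;1;2;0;0], [::0;2;1;1;1;2;1;1]);
  ([::2;1;1;1;2;0;0;2;1], [::1;2;0;0;0;2;1;1;2]);
  ([::2;1;1;1;2;1;1;1], [::0;0;0;2;0;0;0;2]);
  ([::0;0;2;0;0;2;1;1;2], [::1;2;1;1;2;0;0]);
  ([::2;0;0;2;1;1;2;0;0], [::0;0;2;1;1;2;0;0;2]);
  ([::0;0;2;1;1;1;2;0;0;0;2], [::0;2;0;0;0;2;1;1;1]);
  ([::2;0;0;2;1;1;1;2;0], [::0;2;1;1;2;0;0;0;2]);
  ([::2;1;1;2;0;0;0;2;1], [::1;2;0;0;2;1;1;1;2]);
  ([::0;0;0;2;1;1;1;2;0;0], [::1;2;0;0;0;2;1;1]);
  ([::1;2;0;0;0;2;1;1;1;2;0], [::0;0;0;2;0;0;0;2]);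
  ([::0;0;2;1;1;1;2;0;0;0], [::1;1;2;0;0;0;2;1]);
  ([::0;2;0;0;0;2;1;1;1;2], [::1;1;2;0;0;0;2;1]);
  ([::1;2;0;0;2;1;1;1;2;1], [::0;2;1;1;2;0;0;0;2;0]);
  ([::1;1;2;0;0;2;1;1;2], [::0;0;2;1;1;2;0;0]);
  ([::2;0;0;0;2;1;1;1;2], [::0;2;1;1;1;2;0;0;0]);
  ([::0;2;1;1;1;2;0;0;0;2;1], [::1;1;1;2;1;1;1;2]);
  ([::0;2;0;0;0;2;1;1;1], [::1;1;2;1;1;1;2;0]);
  ([::0;0;2;1;1;2;0;0;2], [::1;1;2;0;0;2;1;1]);
  ([::0;0;0;2;1;1;2;0;0], [::1;2;0;0;2;1;1;2]);
  ([::1;1;1;2;0;0;0;2;1], [::0;2;1;1;1;2;0;0;0]);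
  ([::1;1;1;2;1;1;1;2;0], [::2;0;0;0;2;1;1;1]);
  ([::1;1;1;2;0;0;2;1;1], [::0;2;1;1;2;0;0;2]);
  ([::2;1;1;1;2;0;0;0;2], [::1;2;0;0;0;2;1;1;1]);
  ([::1;2;0;0;0;2;1;1;1], [::0;0;0;2;1;1;1;2;0])].
Definition KBC : seq (nat*nat*nat*nat) := [:: (0,0,0,0);(0,1,0,0);(0,2,0,0);(0,3,0,0);(0,4,0,0);(0,5,0,0);(1,0,5,1);(1,1,3,1);(1,1,4,1);(1,4,2,1);(1,5,2,1);(1,5,4,2);(1,0,11,1);(1,1,7,1);(1,1,9,1);(1,2,6,1);(1,2,8,1);(1,6,8,3);(1,6,9,2);(1,8,6,1);(1,8,6,3);(1,9,6,2);(1,0,21,1);(1,1,13,1);(1,1,16,1);(1,2,14,1);(1,2,18,1);(1,14,18,2);(1,16,18,1);(1,0,28,1);(1,1,23,1);(1,24,25,1);(1,25,24,1);(1,28,1,1);(1,28,28,2);(1,0,29,1);(1,0,33,1);(1,24,34,1);(1,25,34,1);(1,29,30,1);(1,29,30,2);(1,29,32,3);(1,29,33,2);(1,30,29,1);(1,30,33,1);(1,30,33,2);(1,31,23,1);(1,32,29,3);(1,32,30,1);(1,32,33,1);(1,32,33,4);(1,32,34,2);(1,33,1,1);(1,34,30,1);(1,34,32,3);(1,0,37,1);(1,0,40,1);(1,0,41,1);(1,0,42,1);(1,0,54,1);(1,1,39,1);(1,1,50,1);(1,1,52,1);(1,23,35,2);(1,23,35,3);(1,23,39,1);(1,23,48,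1);(1,24,49,1);(1,24,52,2);(1,25,42,2);(1,29,37,4);(1,30,40,1);(1,30,41,1);(1,30,54,2);(1,31,39,4);(1,31,45,1);(1,34,44,1);(1,35,0,1);(1,36,31,3);(1,36,36,2);(1,37,32,3);(1,37,37,1);(1,39,38,3);(1,39,45,6);(1,39,53,3);(1,40,44,6);(1,41,38,1);(1,42,24,2);(1,44,31,3);(1,45,29,1);(1,48,42,1);(1,51,31,1);(1,54,1,1);(1,0,88,1);(1,1,85,1);(1,1,91,1);(1,1,92,1);(1,24,77,1);(1,39,63,5)].
Definition CW : seq (seq nat) := [:: [::]; [::0]; [::0;0]; [::0;0;0]; [::0;0;0;0]; [::0;0;0;0;0]; [::0;2;0;2]; [::]; [::0;2;0;0;0]; [::0;2;0;0;0;0]; [::0;2;0;0;0;0;0]; [::0;0;0;0;2]; [::0;2]; [::0;2;0]; [::0;2;0;0]].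
Definition HW : seq (seq (seq nat)) := [:: [:: [::]; [::]; [::]];
  [:: [::]; [::]; [::]];
  [:: [::]; [::]; [::1]];
  [:: [::]; [::]; [::1;1]];
  [:: [::]; [::]; [::]];
  [:: [::0]; [::]; [::1;0;1;1]];
  [:: [::0]; [::0]; [::]];
  [:: [::]; [::0]; [::0]];
  [:: [::]; [::]; [::1;0;1;1]];
  [:: [::]; [::]; [::1;0;1]];
  [:: [::1]; [::]; [::0;1;0]];
  [:: [::1;1]; [::1;1]; [::]];
  [:: [::]; [::1]; [::]];
  [:: [::]; [::]; [::]];
  [:: [::]; [::]; [::1;1;0;1]]].
Definition RELS : seq (seq lt) := [:: [:: Nl 2; Tl 2; Nl 2; Tl 2; Nl 2; Tl 2; Nl 2; Tl 2; Nl 2; Tl 2];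
  [:: Nl 0; Nl 2; Nl 0; Nl 0; Tl 1; Nl 0; Nl 2; Nl 0; Nl 0; Tl 1; Nl 0; Nl 2; Nl 0; Nl 0; Tl 1; Nl 0; Nl 2; Nl 0; Nl 0; Tl 1; Nl 0; Nl 2; Nl 0; Nl 0; Tl 1];
  [:: Nl 0; Tl 7; Nl 0; Tl 7; Nl 0; Tl 7; Nl 0; Tl 7; Nl 0; Tl 7; Nl 0; Tl 7; Nl 0; Tl 7; Nl 0; Tl 7];
  [:: Tl 7; Tl 14; Tl 7; Tl 14];
  [:: Tl 7; Tl 1; Tl 12; Tl 7; Tl 1; Nl 2; Nl 0; Nl 0; Nl 2; Nl 0; Nl 0; Nl 0; Nl 0; Nl 0];
  [:: Tl 7; Tl 14; Tl 1; Tl 8; Tl 5; Tl 12]].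

Definition CERT_COMM : seq stp := [:: Cnj [:: Nl 0];
  Ins [:: Nl 1; Nl 1; Nl 1; Nl 2; Nl 1; Nl 1; Nl 2; Nl 1; Nl 1; Nl 1] 0 false;
  Cnj [:: Nl 2; Nl 0; Nl 0; Nl 0; Nl 2; Nl 0; Nl 0; Nl 2; Nl 0; Nl 0];
  Ins [:: Nl 2; Nl 1; Nl 1; Nl 2; Nl 1; Nl 1; Nl 1; Nl 1] 1 false;
  Cnj [:: Tl 9];
  Cnj [:: Tl 8];
  Cnj [:: Tl 2];
  Inv;
  Cnj [:: Nl 0; Nl 0; Nl 2; Nl 0; Nl 0; Nl 0; Nl 0; Nl 2; Nl 0; Nl 0; Nl 0];
  Ins [:: Nl 2; Nl 1; Nl 2; Nl 1] 0 false;
  Cnj [:: Nl 0; Nl 0; Nl 2; Nl 0; Nl 2];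
  Ins [:: Nl 2; Nl 1; Nl 1; Nl 2; Nl 1; Nl 1; Nl 1; Nl 1] 1 false;
  Cnj [::]].

Definition CERT_L12 : seq stp := [:: Cnj [:: Nl 0];
  Ins [:: Nl 1; Nl 1; Nl 1; Nl 2; Nl 1; Nl 1; Nl 2; Nl 1; Nl 1; Nl 1] 0 false;
  Cnj [:: Tl 12];
  Cnj [:: Tl 1];
  Cnj [:: Tl 12];
  Cnj [:: Tl 1];
  Inv;
  Cnj [:: Nl 0; Nl 0; Nl 0; Nl 2; Nl 0; Nl 0; Nl 2; Nl 0; Nl 0];
  Cnj [:: Tl 1];
  Ins [:: Nl 1; Nl 1; Nl 1; Nl 1; Nl 2; Nl 1; Nl 1; Nl 1] 1 false;
  Cnj [:: Tl 8];
  Cnj [:: Tl 9];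
  Cnj [:: Tl 1];
  Cnj [:: Tl 8];
  Cnj [:: Tl 7];
  Cnj [:: Tl 10];
  Cnj [:: Nl 0; Nl 0; Nl 0; Nl 0; Nl 2; Nl 0; Nl 0; Nl 2; Nl 0; Nl 0; Nl 0];
  Cnj [:: Tl 1];
  Ins [:: Nl 2; Nl 1; Nl 1; Nl 1; Nl 1; Nl 2; Nl 1; Nl 1; Nl 2; Nl 1] 0 false;
  Cnj [:: Tl 5];
  Cnj [:: Tl 2];
  Cnj [:: Tl 5];
  Inv;
  Cnj [:: Nl 0; Nl 0; Nl 0; Nl 2; Nl 0; Nl 0; Nl 0; Nl 0; Nl 2; Nl 0; Nl 0; Nl 2];
  Cnj [:: Tl 1];
  Cnj [:: Tl 2];
  Cnj [:: Tl 1];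
  Cnj [:: Tl 7];
  Cnj [:: Tl 10];
  Cnj [:: Tl 2];
  Cnj [:: Tl 1];
  Cnj [:: Tl 8];
  Cnj [:: Tl 14];
  Ins [:: Nl 2; Nl 1; Nl 1; Nl 2; Nl 1; Nl 1; Nl 1; Nl 1] 1 false;
  Cnj [:: Tl 9];
  Cnj [:: Tl 8];
  Cnj [:: Tl 1];
  Cnj [:: Tl 7];
  Cnj [:: Tl 10];
  Cnj [:: Tl 2];
  Cnj [:: Tl 1];
  Cnj [:: Tl 8];
  Cnj [:: Nl 2; Nl 0; Nl 0; Nl 2; Nl 0; Nl 0; Nl 2];
  Cnj [:: Tl 1];
  Cnj [:: Tl 2];
  Cnj [:: Tl 3];
  Ins [:: Nl 1; Nl 1; Nl 2; Nl 1; Nl 1; Nl 1; Nl 2] 0 false;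
  Cnj [:: Nl 0; Nl 2; Nl 0; Nl 0; Nl 0; Nl 2; Nl 0; Nl 0];
  Cnj [:: Tl 1];
  Cnj [:: Tl 2];
  Cnj [:: Tl 1];
  Cnj [:: Tl 7];
  Cnj [:: Tl 10];
  Cnj [:: Tl 1];
  Cnj [:: Tl 8];
  Cnj [:: Tl 9];
  Cnj [:: Tl 3];
  Ins [:: Nl 2; Nl 1; Nl 1; Nl 1; Nl 2; Nl 1; Nl 1; Nl 2] 1 false;
  Cnj [:: Tl 9];
  Inv;
  Cnj [:: Nl 0; Nl 0; Nl 0; Nl 0; Nl 2; Nl 0; Nl 0];
  Ins [:: Nl 2; Nl 1; Nl 2; Nl 1] 0 false;
  Cnj [:: Nl 0; Nl 0; Nl 2; Nl 0; Nl 2];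
  Cnj [:: Tl 1];
  Ins [:: Nl 2] 0 false;
  Cnj [:: Tl 3];
  Inv;
  Cnj [:: Nl 0; Nl 0; Nl 0; Nl 2; Nl 0; Nl 0; Nl 2; Nl 0; Nl 0; Nl 0];
  Cnj [:: Tl 1];
  Cnj [:: Tl 2];
  Cnj [:: Tl 1];
  Cnj [:: Tl 8];
  Cnj [:: Tl 9];
  Ins [:: Nl 1; Nl 1; Nl 1; Nl 1; Nl 1; Nl 2; Nl 1] 1 false;
  Cnj [:: Tl 1];
  Cnj [:: Nl 0; Nl 0; Nl 0; Nl 0; Nl 0; Nl 2; Nl 0; Nl 0];
  Ins [:: Nl 2; Nl 1; Nl 2; Nl 1] 0 false;
  Cnj [:: Nl 0; Nl 0; Nl 2; Nl 0; Nl 2];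
  Ins [:: Nl 2; Nl 1; Nl 1; Nl 2; Nl 1; Nl 1; Nl 1; Nl 1] 1 false;
  Cnj [::]].

Definition CERT_M : seq stp := [:: Cnj [:: Tl 7];
  Inv;
  Cnj [:: Nl 2; Nl 0];
  Ins [:: Nl 2; Nl 1; Nl 2; Nl 1] 0 false;
  Cnj [:: Nl 0; Nl 0; Nl 2; Nl 0; Nl 2];
  Ins [:: Nl 2; Nl 1; Nl 1; Nl 2; Nl 1; Nl 1; Nl 1; Nl 1] 1 false;
  Cnj [:: Tl 9];
  Cnj [:: Tl 8];
  Cnj [:: Tl 2];
  Inv;
  Cnj [:: Nl 0; Nl 0; Nl 2; Nl 0; Nl 0; Nl 0; Nl 0; Nl 2; Nl 0; Nl 0; Nl 0];
  Cnj [:: Tl 1];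
  Cnj [:: Tl 2];
  Cnj [:: Tl 6];
  Ins [:: Nl 1; Nl 1; Nl 2; Nl 1; Nl 1; Nl 2; Nl 1; Nl 1; Nl 1; Nl 2] 4 false;
  Cnj [::];
  Ins [:: Nl 1; Nl 2; Nl 1; Nl 1; Nl 1; Nl 1] 0 false;
  Cnj [:: Tl 14];
  Cnj [:: Tl 1];
  Cnj [:: Tl 14];
  Cnj [:: Tl 1];
  Inv;
  Cnj [:: Nl 2; Nl 0; Nl 0; Nl 2; Nl 0; Nl 0; Nl 2; Nl 0; Nl 0; Nl 2];
  Cnj [:: Tl 1];
  Cnj [:: Tl 2];
  Ins [:: Nl 1] 2 true;
  Cnj [:: Tl 7];
  Cnj [:: Tl 6];
  Cnj [:: Tl 5];
  Cnj [:: Tl 4];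
  Inv;
  Cnj [:: Nl 0; Nl 0; Nl 0; Nl 0];
  Cnj [:: Tl 1];
  Ins [:: Nl 1; Nl 2; Nl 1; Nl 1; Nl 2; Nl 1; Nl 1; Nl 1; Nl 1] 1 false;
  Cnj [:: Tl 10];
  Cnj [:: Tl 9];
  Cnj [:: Tl 3];
  Cnj [:: Tl 5];
  Cnj [:: Nl 2; Nl 0; Nl 0; Nl 0];
  Cnj [:: Tl 1];
  Cnj [:: Tl 2];
  Cnj [:: Tl 4];
  Ins [:: Nl 2; Nl 1; Nl 1; Nl 2; Nl 1; Nl 1; Nl 1; Nl 1; Nl 2; Nl 1; Nl 1] 4 false;
  Cnj [:: Tl 13];
  Cnj [:: Tl 5];
  Cnj [:: Tl 7];
  Cnj [:: Tl 10];
  Inv;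
  Cnj [:: Nl 2; Nl 0; Nl 0; Nl 0; Nl 2];
  Cnj [:: Tl 1];
  Ins [:: Nl 1; Nl 2; Nl 1; Nl 1; Nl 2; Nl 1; Nl 1; Nl 1; Nl 1; Nl 2; Nl 1] 4 false;
  Cnj [:: Tl 12];
  Inv;
  Cnj [:: Nl 2; Nl 0; Nl 0; Nl 0; Nl 2; Nl 0; Nl 0; Nl 2; Nl 0; Nl 0];
  Ins [:: Nl 2; Nl 1; Nl 2; Nl 1] 0 false;
  Cnj [:: Nl 0; Nl 0; Nl 2; Nl 0; Nl 2];
  Cnj [:: Tl 1];
  Ins [:: Nl 1; Nl 2; Nl 1; Nl 1; Nl 1; Nl 2; Nl 1; Nl 1; Nl 1; Nl 1; Nl 1] 1 false;
  Cnj [:: Tl 11];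
  Cnj [:: Tl 9];
  Cnj [:: Tl 4];
  Cnj [:: Tl 8];
  Cnj [:: Tl 3];
  Cnj [:: Tl 6];
  Cnj [:: Nl 2; Nl 0; Nl 0; Nl 2];
  Cnj [:: Tl 1];
  Cnj [:: Tl 2];
  Cnj [:: Tl 4];
  Cnj [:: Tl 1];
  Cnj [:: Tl 6];
  Ins [:: Nl 2; Nl 1; Nl 1; Nl 2; Nl 1; Nl 1] 4 false;
  Cnj [:: Tl 10];
  Cnj [:: Tl 11];
  Cnj [:: Tl 9];
  Cnj [:: Tl 7];
  Cnj [:: Tl 13];
  Cnj [:: Tl 1];
  Cnj [:: Nl 0; Nl 0; Nl 0; Nl 0; Nl 2; Nl 0; Nl 0; Nl 2; Nl 0; Nl 0];
  Ins [:: Nl 1] 2 true;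
  Cnj [:: Tl 7];
  Cnj [:: Tl 6];
  Cnj [:: Tl 5];
  Cnj [:: Tl 4];
  Inv;
  Cnj [:: Nl 0; Nl 0; Nl 0; Nl 0];
  Ins [:: Nl 2; Nl 1; Nl 1; Nl 2; Nl 1; Nl 1; Nl 1; Nl 1] 1 false;
  Cnj [:: Tl 9];
  Cnj [:: Tl 8];
  Cnj [:: Nl 2; Nl 0; Nl 0; Nl 2; Nl 0; Nl 0; Nl 0; Nl 0; Nl 2];
  Ins [:: Nl 1] 4 false;
  Cnj [::]].

Definition CERTS42 : seq (nat*nat*nat * seq stp) := [::
 ((1,2,6), [:: Cnj [:: Tl 1];
  Inv;
  Cnj [:: Nl 2; Nl 0; Nl 2; Nl 0; Nl 0];
  Ins [:: Nl 2; Nl 1; Nl 1; Nl 1; Nl 2; Nl 1; Nl 1; Nl 2; Tl 12] 5 true;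
  Cnj [::]]);
 ((1,3,4), [:: Cnj [:: Tl 1];
  Inv;
  Cnj [:: Nl 0; Nl 0; Nl 0; Nl 0; Nl 2; Nl 0; Nl 0; Nl 2; Nl 0; Nl 0; Nl 0; Nl 2];
  Ins [:: Nl 2; Nl 1; Nl 1; Nl 1; Nl 2; Nl 1; Nl 1; Nl 2; Tl 12] 5 true;
  Cnj [::]]);
 ((1,4,3), [:: Cnj [:: Tl 1];
  Inv;
  Cnj [:: Nl 0; Nl 2; Nl 0; Nl 0; Nl 0; Nl 0; Nl 0];
  Ins [:: Nl 2; Nl 1; Nl 1; Nl 1; Nl 2; Nl 1; Nl 1; Nl 2; Tl 12] 5 true;
  Cnj [::]]);
 ((1,5,7), [:: Cnj [:: Tl 1];
  Inv;
  Cnj [:: Nl 2; Nl 0; Nl 0; Nl 2; Nl 0; Nl 0; Nl 2; Nl 0; Nl 0; Nl 2];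
  Ins [:: Nl 2; Nl 1; Nl 1; Nl 1; Nl 2; Nl 1; Nl 1; Nl 2; Tl 12] 5 true;
  Cnj [::]]);
 ((1,6,2), [:: Cnj [:: Tl 1];
  Inv;
  Cnj [:: Nl 2; Nl 0; Nl 0; Nl 0; Nl 2; Nl 0; Nl 0; Nl 0];
  Ins [:: Nl 2; Nl 1; Nl 1; Nl 1; Nl 2; Nl 1; Nl 1; Nl 2; Tl 12] 5 true;
  Cnj [::]]);
 ((1,7,5), [:: Cnj [:: Tl 1];
  Inv;
  Cnj [:: Nl 0; Nl 0; Nl 0; Nl 2; Nl 0; Nl 0; Nl 2; Nl 0; Nl 0];
  Ins [:: Nl 2; Nl 1; Nl 1; Nl 1; Nl 2; Nl 1; Nl 1; Nl 2; Tl 12] 5 true;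
  Cnj [::]]);
 ((2,1,6), [:: Cnj [:: Tl 2];
  Inv;
  Cnj [:: Nl 0; Nl 0; Nl 2; Nl 0; Nl 0; Nl 2; Nl 0; Nl 0];
  Ins [:: Nl 2; Nl 1; Nl 1; Nl 1; Nl 2; Nl 1; Nl 1; Nl 2; Tl 12] 5 true;
  Cnj [::]]);
 ((2,3,7), [:: Cnj [:: Tl 2];
  Inv;
  Cnj [:: Nl 0; Nl 0; Nl 0; Nl 0; Nl 0; Nl 2; Nl 0];
  Ins [:: Nl 2; Nl 1; Nl 1; Nl 1; Nl 2; Nl 1; Nl 1; Nl 2; Tl 12] 5 true;
  Cnj [::]]);
 ((2,4,5), [:: Cnj [:: Tl 2];
  Inv;
  Cnj [:: Nl 0; Nl 0; Nl 0; Nl 2; Nl 0; Nl 0; Nl 2; Nl 0; Nl 0; Nl 0; Nl 2];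
  Ins [:: Nl 2; Nl 1; Nl 1; Nl 1; Nl 2; Nl 1; Nl 1; Nl 2; Tl 12] 5 true;
  Cnj [::]]);
 ((2,5,4), [:: Cnj [:: Tl 2];
  Inv;
  Cnj [:: Nl 2; Nl 0; Nl 0; Nl 0; Nl 0; Nl 0];
  Ins [:: Nl 2; Nl 1; Nl 1; Nl 1; Nl 2; Nl 1; Nl 1; Nl 2; Tl 12] 5 true;
  Cnj [::]]);
 ((2,6,1), [:: Cnj [:: Tl 2];
  Inv;
  Cnj [:: Nl 0; Nl 0; Nl 2; Nl 0; Nl 0; Nl 0; Nl 0; Nl 2; Nl 0; Nl 0; Nl 0];
  Ins [:: Nl 2; Nl 1; Nl 1; Nl 1; Nl 2; Nl 1; Nl 1; Nl 2; Tl 12] 5 true;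
  Cnj [::]]);
 ((2,7,3), [:: Cnj [:: Tl 2];
  Inv;
  Cnj [:: Nl 0; Nl 0; Nl 0; Nl 2; Nl 0; Nl 0; Nl 0; Nl 0; Nl 2];
  Ins [:: Nl 2; Nl 1; Nl 1; Nl 1; Nl 2; Nl 1; Nl 1; Nl 2; Tl 12] 5 true;
  Cnj [::]]);
 ((3,1,4), [:: Cnj [:: Tl 3];
  Inv;
  Cnj [:: Nl 0; Nl 0; Nl 2; Nl 0; Nl 0; Nl 0; Nl 0; Nl 2];
  Ins [:: Nl 2; Nl 1; Nl 1; Nl 1; Nl 2; Nl 1; Nl 1; Nl 2; Tl 12] 5 true;
  Cnj [::]]);
 ((3,2,7), [:: Cnj [:: Tl 3];
  Inv;
  Cnj [:: Nl 0; Nl 2; Nl 0; Nl 0; Nl 2; Nl 0; Nl 0];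
  Ins [:: Nl 2; Nl 1; Nl 1; Nl 1; Nl 2; Nl 1; Nl 1; Nl 2; Tl 12] 5 true;
  Cnj [::]]);
 ((3,4,1), [:: Cnj [:: Tl 3];
  Inv;
  Cnj [:: Nl 0; Nl 0; Nl 0; Nl 0; Nl 2; Nl 0];
  Ins [:: Nl 2; Nl 1; Nl 1; Nl 1; Nl 2; Nl 1; Nl 1; Nl 2; Tl 12] 5 true;
  Cnj [::]]);
 ((3,5,6), [:: Cnj [:: Tl 3];
  Inv;
  Cnj [:: Nl 0; Nl 0; Nl 2; Nl 0; Nl 0; Nl 2; Nl 0; Nl 0; Nl 0; Nl 2];
  Ins [:: Nl 2; Nl 1; Nl 1; Nl 1; Nl 2; Nl 1; Nl 1; Nl 2; Tl 12] 5 true;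
  Cnj [::]]);
 ((3,6,5), [:: Cnj [:: Tl 3];
  Inv;
  Cnj [:: Nl 2; Nl 0; Nl 0; Nl 2; Nl 0; Nl 2];
  Ins [:: Nl 2; Nl 1; Nl 1; Nl 1; Nl 2; Nl 1; Nl 1; Nl 2; Tl 12] 5 true;
  Cnj [::]]);
 ((3,7,2), [:: Cnj [:: Tl 3];
  Inv;
  Cnj [:: Nl 0; Nl 2; Nl 0; Nl 0; Nl 0; Nl 0; Nl 2; Nl 0; Nl 0; Nl 0];
  Ins [:: Nl 2; Nl 1; Nl 1; Nl 1; Nl 2; Nl 1; Nl 1; Nl 2; Tl 12] 5 true;
  Cnj [::]]);
 ((4,1,3), [:: Cnj [:: Tl 4];
  Inv;
  Cnj [:: Nl 2; Nl 0; Nl 0; Nl 0; Nl 0; Nl 2; Nl 0; Nl 0; Nl 0];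
  Ins [:: Nl 2; Nl 1; Nl 1; Nl 1; Nl 2; Nl 1; Nl 1; Nl 2; Tl 12] 5 true;
  Cnj [::]]);
 ((4,2,5), [:: Cnj [:: Tl 4];
  Inv;
  Cnj [:: Nl 0; Nl 2; Nl 0; Nl 0; Nl 0; Nl 0; Nl 2];
  Ins [:: Nl 2; Nl 1; Nl 1; Nl 1; Nl 2; Nl 1; Nl 1; Nl 2; Tl 12] 5 true;
  Cnj [::]]);
 ((4,3,1), [:: Cnj [:: Tl 4];
  Inv;
  Cnj [:: Nl 2; Nl 0; Nl 0; Nl 2; Nl 0; Nl 0];
  Ins [:: Nl 2; Nl 1; Nl 1; Nl 1; Nl 2; Nl 1; Nl 1; Nl 2; Tl 12] 5 true;
  Cnj [::]]);
 ((4,5,2), [:: Cnj [:: Tl 4];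
  Inv;
  Cnj [:: Nl 0; Nl 0; Nl 0; Nl 2; Nl 0];
  Ins [:: Nl 2; Nl 1; Nl 1; Nl 1; Nl 2; Nl 1; Nl 1; Nl 2; Tl 12] 5 true;
  Cnj [::]]);
 ((4,6,7), [:: Cnj [:: Tl 4];
  Inv;
  Cnj [:: Nl 0; Nl 2; Nl 0; Nl 0; Nl 2; Nl 0; Nl 0; Nl 0; Nl 2];
  Ins [:: Nl 2; Nl 1; Nl 1; Nl 1; Nl 2; Nl 1; Nl 1; Nl 2; Tl 12] 5 true;
  Cnj [::]]);
 ((4,7,6), [:: Cnj [:: Tl 4];
  Inv;
  Cnj [:: Nl 2; Nl 0; Nl 2; Nl 0; Nl 0; Nl 0; Nl 2; Nl 0; Nl 2];
  Ins [:: Nl 2; Nl 1; Nl 1; Nl 1; Nl 2; Nl 1; Nl 1; Nl 2; Tl 12] 5 true;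
  Cnj [::]]);
 ((5,1,7), [:: Cnj [:: Tl 5];
  Inv;
  Cnj [:: Nl 0; Nl 0; Nl 0; Nl 0; Nl 2; Nl 0; Nl 0; Nl 0; Nl 0; Nl 0];
  Ins [:: Nl 2; Nl 1; Nl 1; Nl 1; Nl 2; Nl 1; Nl 1; Nl 2; Tl 12] 5 true;
  Cnj [::]]);
 ((5,2,4), [:: Cnj [:: Tl 5];
  Inv;
  Cnj [:: Nl 0; Nl 0; Nl 2; Nl 0; Nl 0; Nl 0; Nl 0; Nl 2; Nl 0; Nl 2];
  Ins [:: Nl 2; Nl 1; Nl 1; Nl 1; Nl 2; Nl 1; Nl 1; Nl 2; Tl 12] 5 true;
  Cnj [::]]);
 ((5,3,6), [:: Cnj [:: Tl 5];
  Inv;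
  Cnj [:: Nl 2; Nl 0; Nl 0; Nl 0; Nl 0; Nl 2];
  Ins [:: Nl 2; Nl 1; Nl 1; Nl 1; Nl 2; Nl 1; Nl 1; Nl 2; Tl 12] 5 true;
  Cnj [::]]);
 ((5,4,2), [:: Cnj [:: Tl 5];
  Inv;
  Cnj [:: Nl 0; Nl 2; Nl 0; Nl 0; Nl 0; Nl 2; Nl 0; Nl 0; Nl 2];
  Ins [:: Nl 2; Nl 1; Nl 1; Nl 1; Nl 2; Nl 1; Nl 1; Nl 2; Tl 12] 5 true;
  Cnj [::]]);
 ((5,6,3), [:: Cnj [:: Tl 5];
  Inv;
  Cnj [:: Nl 0; Nl 0; Nl 2; Nl 0];
  Ins [:: Nl 2; Nl 1; Nl 1; Nl 1; Nl 2; Nl 1; Nl 1; Nl 2; Tl 12] 5 true;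
  Cnj [::]]);
 ((5,7,1), [:: Cnj [:: Tl 5];
  Inv;
  Cnj [:: Nl 2; Nl 0; Nl 0; Nl 2; Nl 0; Nl 0; Nl 0; Nl 2];
  Ins [:: Nl 2; Nl 1; Nl 1; Nl 1; Nl 2; Nl 1; Nl 1; Nl 2; Tl 12] 5 true;
  Cnj [::]]);
 ((6,1,2), [:: Cnj [:: Tl 6];
  Inv;
  Cnj [:: Nl 0; Nl 2; Nl 0; Nl 0; Nl 2; Nl 0; Nl 0; Nl 0; Nl 0; Nl 0];
  Ins [:: Nl 2; Nl 1; Nl 1; Nl 1; Nl 2; Nl 1; Nl 1; Nl 2; Tl 12] 5 true;
  Cnj [::]]);
 ((6,2,1), [:: Cnj [:: Tl 6];
  Inv;
  Cnj [:: Nl 0; Nl 0; Nl 0; Nl 2; Nl 0; Nl 0; Nl 0; Nl 0; Nl 0];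
  Ins [:: Nl 2; Nl 1; Nl 1; Nl 1; Nl 2; Nl 1; Nl 1; Nl 2; Tl 12] 5 true;
  Cnj [::]]);
 ((6,3,5), [:: Cnj [:: Tl 6];
  Inv;
  Cnj [:: Nl 0; Nl 2; Nl 0; Nl 0; Nl 0; Nl 0; Nl 2; Nl 0; Nl 2];
  Ins [:: Nl 2; Nl 1; Nl 1; Nl 1; Nl 2; Nl 1; Nl 1; Nl 2; Tl 12] 5 true;
  Cnj [::]]);
 ((6,4,7), [:: Cnj [:: Tl 6];
  Inv;
  Cnj [:: Nl 2; Nl 0; Nl 0; Nl 2; Nl 0; Nl 0; Nl 2; Nl 0];
  Ins [:: Nl 2; Nl 1; Nl 1; Nl 1; Nl 2; Nl 1; Nl 1; Nl 2; Tl 12] 5 true;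
  Cnj [::]]);
 ((6,5,3), [:: Cnj [:: Tl 6];
  Inv;
  Cnj [:: Nl 2; Nl 0; Nl 0; Nl 0; Nl 2; Nl 0; Nl 0; Nl 2];
  Ins [:: Nl 2; Nl 1; Nl 1; Nl 1; Nl 2; Nl 1; Nl 1; Nl 2; Tl 12] 5 true;
  Cnj [::]]);
 ((6,7,4), [:: Cnj [:: Tl 6];
  Inv;
  Cnj [:: Nl 0; Nl 2; Nl 0];
  Ins [:: Nl 2; Nl 1; Nl 1; Nl 1; Nl 2; Nl 1; Nl 1; Nl 2; Tl 12] 5 true;
  Cnj [::]]);
 ((7,1,5), [:: Cnj [:: Tl 7];
  Inv;
  Cnj [:: Nl 2; Nl 0];
  Ins [:: Nl 2; Nl 1; Nl 1; Nl 1; Nl 2; Nl 1; Nl 1; Nl 2; Tl 12] 5 true;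
  Cnj [::]]);
 ((7,2,3), [:: Cnj [:: Tl 7];
  Inv;
  Cnj [:: Nl 2; Nl 0; Nl 0; Nl 2; Nl 0; Nl 0; Nl 0; Nl 0; Nl 0];
  Ins [:: Nl 2; Nl 1; Nl 1; Nl 1; Nl 2; Nl 1; Nl 1; Nl 2; Tl 12] 5 true;
  Cnj [::]]);
 ((7,3,2), [:: Cnj [:: Tl 7];
  Inv;
  Cnj [:: Nl 0; Nl 0; Nl 2; Nl 0; Nl 0; Nl 0; Nl 0; Nl 0];
  Ins [:: Nl 2; Nl 1; Nl 1; Nl 1; Nl 2; Nl 1; Nl 1; Nl 2; Tl 12] 5 true;
  Cnj [::]]);
 ((7,4,6), [:: Cnj [:: Tl 7];
  Inv;
  Cnj [:: Nl 2; Nl 0; Nl 0; Nl 0; Nl 0; Nl 2; Nl 0; Nl 2];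
  Ins [:: Nl 2; Nl 1; Nl 1; Nl 1; Nl 2; Nl 1; Nl 1; Nl 2; Tl 12] 5 true;
  Cnj [::]]);
 ((7,5,1), [:: Cnj [:: Tl 7];
  Inv;
  Cnj [:: Nl 0; Nl 2; Nl 0; Nl 0; Nl 0; Nl 2; Nl 0; Nl 0; Nl 0];
  Ins [:: Nl 2; Nl 1; Nl 1; Nl 1; Nl 2; Nl 1; Nl 1; Nl 2; Tl 12] 5 true;
  Cnj [::]]);
 ((7,6,4), [:: Cnj [:: Tl 7];
  Inv;
  Cnj [:: Nl 0; Nl 0; Nl 0; Nl 0; Nl 2; Nl 0; Nl 0; Nl 2; Nl 0; Nl 0];
  Ins [:: Nl 2; Nl 1; Nl 1; Nl 1; Nl 2; Nl 1; Nl 1; Nl 2; Tl 12] 5 true;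
  Cnj [::]])].
Definition SGW (i : nat) : seq nat := if i == 0 then [:: 2] else [:: 0; 0; 2; 1; 1; 1].
Definition cwf (a : nat) : seq nat := nth [::] CW a.
Definition hwf (a c : nat) : seq nat := nth [::] (nth [::] HW a) c.

Definition hok : bool :=
  all (fun a => all (fun c =>
    red FUEL KBR (cwf a ++ [:: c]) ==
    red FUEL KBR (flatten (map SGW (hwf a c)) ++ cwf (actL c a))) (iota 0 3)) (iota 1 14).

Lemma hok_true : hok = true. Proof. vm_compute. reflexivity. Qed.
Lemma kb_true : kb_ok KBR KBC = true. Proof. vm_compute. reflexivity. Qed.

Definition tgt (i j k : nat) : seq lt :=
  [:: Tl i; Tl (i + 7); Tl j; Tl (j + 7); Tl k; Tl (k + 7)].

Definition certfor (i j k : nat) : seq stp :=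
  let f := fun q : nat * nat * nat * seq stp => (q.1.1.1 == i) && (q.1.1.2 == j) && (q.1.2 == k) in
  (nth (0, 0, 0, [::]) CERTS42 (find f CERTS42)).2.

Definition final_ok : bool :=
  all (fun i => all (fun j => all (fun k =>
    ~~ collinear i j k || cert_ok KBR RELS (tgt i j k) (certfor i j k))
  (iota 0 8)) (iota 0 8)) (iota 0 8).

Lemma final_true : final_ok = true. Proof. vm_compute. reflexivity. Qed.

Lemma stage1_true : cert_ok KBR (take 3 RELS) (nth [::] RELS 3) CERT_COMM = true.
Proof. vm_compute. reflexivity. Qed.
Lemma stage2_true : cert_ok KBR (take 4 RELS) (nth [::] RELS 4) CERT_L12 = true.
Proof. vm_compute. reflexivity. Qed.
Lemma stage3_true : cert_ok KBR (take 5 RELS) (nth [::] RELS 5) CERT_M = true.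
Proof. vm_compute. reflexivity. Qed.

Lemma okRELS : all okw RELS. Proof. vm_compute. reflexivity. Qed.

Section Sem.
Variable G : group.
Local Notation "a * b" := (gmul a b).
Local Notation e := (gone G).

Lemma gcomm_comm (a b : G) : gcomm a b = e -> a * b = b * a.
Proof.
rewrite /gcomm => H.
have E : (b * a) * (((ginv a * ginv b) * a) * b) = a * b.
  by rewrite -!gmulA (gmulA a (ginv a)) GmulV gmul1g GmulKV.
by rewrite -E H Gmul1.
Qed.

Lemma gconj_mul (a g h : G) : gconj a (g * h) = gconj (gconj a g) h.
Proof. by rewrite /gconj GinvM -!gmulA. Qed.

Lemma gconj_comm (a g : G) : a * g = g * a -> gconj a g = a.
Proof. by move=> H; rewrite /gconj -gmulA H GmulK. Qed.

Lemma gconj1 (a : G) : gconj a e = a.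
Proof. by rewrite /gconj Ginv1 gmul1g Gmul1. Qed.

Lemma comm_mul (a b c : G) : a * b = b * a -> a * c = c * a -> a * (b * c) = (b * c) * a.
Proof. by move=> H1 H2; rewrite gmulA H1 -gmulA H2 gmulA. Qed.

Lemma comm_conj (a q b : G) : gconj a q * b = b * gconj a q ->
  a * (q * b * ginv q) = (q * b * ginv q) * a.
Proof.
rewrite /gconj => H.
have H2 : q * ((ginv q * a * q) * b) * ginv q = q * (b * (ginv q * a * q)) * ginv q by rewrite H.
move: H2; rewrite -!gmulA !GmulKV.
by rewrite GmulV Gmul1.
Qed.

Lemma gpow_ev (x y : G) u n : evN x y (flatten (nseq n u)) = gpow (evN x y u) n.
Proof. by elim: n => //= n IH; rewrite evN_cat IH. Qed.
End Sem.

Section Main.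
Variable G : group.
Variables x y t : G.
Hypothesis HG : GG_relations x y t.
Local Notation "a * b" := (gmul a b).
Local Notation e := (gone G).
Local Notation evN := (evN x y).
Local Notation tt := (tt x y t cwf).
Local Notation evW := (evW x y t cwf).

Lemma facts :
  gpow x 7 = e /\ y * y = e /\ gpow (x * y) 3 = e /\ gpow (gcomm x y) 4 = e /\
  t * t = e /\ gcomm (gconj t (x * x)) (y * ginv x) = e /\ gcomm t y = e /\
  gpow (y * gconj t (x * x)) 5 = e /\
  gpow (x * y * (x * x) * gconj t x) 5 = e /\ gpow (x * t) 8 = e.
Proof.
move: HG; rewrite /GG_relations /=.
move=> [H1 [H2 [H3 [H4 [H5 [H6 [H7 [H8 [H9 H10]]]]]]]]].
by rewrite !Gmul1 in H2 H5.
Qed.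

Lemma Hy2 : y * y = e. Proof. by case: facts => _ [H _]. Qed.
Lemma Ht2 : t * t = e. Proof. by case: facts => _ [_ [_ [_ [H _]]]]. Qed.
Lemma yinv : ginv y = y. Proof. apply: Ginv_uniq; exact: Hy2. Qed.

Lemma axN_ok : forall a, a \in axN -> evN a = e.
Proof.
case: facts => H1 [H2 [H3 [H4 _]]].
move=> a /(nthP [::]) [i Hi <-].
case: i Hi => [|[|[|[|[|[|i]]]]]] Hi; last by [].
- by rewrite /= Gmul1 GmulV.
- by rewrite /= Gmul1 gmulVg.
- by rewrite /= Gmul1.
- exact H1.
- change (evN (flatten (nseq 3 [:: 0; 2])) = e).
  by rewrite gpow_ev /= Gmul1.
- change (evN (flatten (nseq 4 [:: 1; 2; 0; 2])) = e).
  rewrite gpow_ev -H4 /gcomm yinv /= Gmul1.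
  by rewrite -!gmulA.
Qed.

Lemma Hrs : rsound x y KBR.
Proof. apply: (kb_sound axN_ok); exact: kb_true. Qed.

Definition zz : G := evN [:: 0; 0; 2; 1; 1; 1].

Lemma comm_y : t * y = y * t.
Proof. apply: gcomm_comm; by case: facts => _ [_ [_ [_ [_ [_ [H _]]]]]]. Qed.

Lemma comm_z : t * zz = zz * t.
Proof.
case: facts => _ [_ [_ [_ [_ [H6 _]]]]].
have := comm_conj (gcomm_comm H6).
have -> : x * x * (y * ginv x) * ginv (x * x) = zz.
  by rewrite /zz /= Gmul1 GinvM -!gmulA.
by [].
Qed.

Lemma comm_SGW h : t * evN (flatten (map SGW h)) = evN (flatten (map SGW h)) * t.
Proof.
elim: h => [|i h IH] /=; first by rewrite Gmul1 gmul1g.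
rewrite evN_cat; apply: comm_mul => //.
rewrite /SGW; case: (i == 0).
  by rewrite /= Gmul1 comm_y.
exact: comm_z.
Qed.

Lemma evN1 c : evN [:: c] = evl x y c.
Proof. by rewrite /= Gmul1. Qed.

Lemma Tlem c a : c < 3 -> inr a -> gconj (tt a) (evl x y c) = tt (actL c a).
Proof.
move=> Hc Ha.
have := hok_true; rewrite /hok => /allP /(_ a).
have Ha' : a \in iota 1 14.
  by rewrite mem_iota; case/andP: Ha => H1 H2; rewrite H1 add1n ltnS -ltnS H2.
move=> /(_ Ha') /allP /(_ c); rewrite mem_iota add0n => /(_ Hc) /eqP E.
rewrite /TS.tt -gconj_mul -evN1 -evN_cat -(red_sound FUEL _ Hrs) E red_sound; last exact: Hrs.
rewrite evN_cat gconj_mul (gconj_comm (comm_SGW _)).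
by [].
Qed.
Lemma evW_pow u n : evW (flatten (nseq n u)) = gpow (evW u) n.
Proof. by elim: n => //= n IH; rewrite evW_cat IH. Qed.

Lemma base0 : evW (nth [::] RELS 0) = e.
Proof.
case: facts => _ [_ [_ [_ [_ [_ [_ [H8 _]]]]]]].
change (evW (flatten (nseq 5 [:: Nl 2; Tl 2])) = e).
rewrite evW_pow -H8; congr gpow.
by rewrite /= /TS.tt /= !Gmul1.
Qed.

Lemma base1 : evW (nth [::] RELS 1) = e.
Proof.
case: facts => _ [_ [_ [_ [_ [_ [_ [_ [H9 _]]]]]]]].
change (evW (flatten (nseq 5 [:: Nl 0; Nl 2; Nl 0; Nl 0; Tl 1])) = e).
rewrite evW_pow -H9; congr gpow.
by rewrite /= /TS.tt /= !Gmul1 -!gmulA.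
Qed.

Lemma base2 : evW (nth [::] RELS 2) = e.
Proof.
case: facts => _ [_ [_ [_ [_ [_ [_ [_ [_ H10]]]]]]]].
change (evW (flatten (nseq 8 [:: Nl 0; Tl 7])) = e).
rewrite evW_pow -H10; congr gpow.
by rewrite /= /TS.tt /= !Gmul1 gconj1.
Qed.
Lemma hrels_take n : (forall r, r < n -> evW (nth [::] RELS r) = e) ->
  forall r, okw (nth [::] (take n RELS) r) /\ evW (nth [::] (take n RELS) r) = e.
Proof.
move=> H r; case: (ltnP r n) => Hr.
  case: (ltnP r (size RELS)) => Hs.
    rewrite nth_take //; split; [exact: (all_nthP [::] okRELS) | exact: H].
  rewrite nth_default //; rewrite size_take_min; exact: leq_trans (geq_minr _ _) Hs.
rewrite nth_default //; rewrite size_take_min; exact: leq_trans (geq_minl _ _) Hr.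
Qed.

Definition CS := @cert_sound G x y t cwf KBR Hrs Ht2 Tlem Hy2.

Lemma rel3 : evW (nth [::] RELS 3) = e.
Proof.
have H1 : forall r, r < 3 -> evW (nth [::] RELS r) = e.
  move=> r; case: r => [|[|[|r]]] // _; [exact: base0 | exact: base1 | exact: base2].
have H2 := hrels_take H1.
have H3 : okw (nth [::] RELS 3) by [].
exact: (CS H2 H3 stage1_true).
Qed.

Lemma rel4 : evW (nth [::] RELS 4) = e.
Proof.
have H1 : forall r, r < 4 -> evW (nth [::] RELS r) = e.
  move=> r; case: r => [|[|[|[|r]]]] // _; [exact: base0 | exact: base1 | exact: base2 | exact: rel3].
have H2 := hrels_take H1.
have H3 : okw (nth [::] RELS 4) by [].
exact: (CS H2 H3 stage2_true).
Qed.

Lemma rel5 : evW (nth [::] RELS 5) = e.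
Proof.
have H1 : forall r, r < 5 -> evW (nth [::] RELS r) = e.
  move=> r; case: r => [|[|[|[|[|r]]]]] // _; [exact: base0 | exact: base1 | exact: base2 | exact: rel3 | exact: rel4].
have H2 := hrels_take H1.
have H3 : okw (nth [::] RELS 5) by [].
exact: (CS H2 H3 stage3_true).
Qed.

Lemma hrels_all r : okw (nth [::] RELS r) /\ evW (nth [::] RELS r) = e.
Proof.
have := @hrels_take 6 _ r; rewrite take_oversize //; apply.
move=> r'; case: r' => [|[|[|[|[|[|r']]]]]] // _;
  [exact: base0 | exact: base1 | exact: base2 | exact: rel3 | exact: rel4 | exact: rel5].
Qed.

Lemma main_sem i j k : collinear i j k -> evW (tgt i j k) = e.
Proof.
move=> Hc.
have Hr : [/\ 0 < i < 8, 0 < j < 8 & 0 < k < 8].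
  move: Hc; rewrite /collinear => /and4P [_ _ _ /hasP [L HL /and3P [Hi Hj Hk]]].
  have Hf : all (fun L => all (fun a => (0 < a) && (a < 8)) L) fano_lines by [].
  have HL' := allP Hf L HL.
  by split; apply: (allP HL').
case: Hr => /andP [Hi1 Hi2] /andP [Hj1 Hj2] /andP [Hk1 Hk2].
have := final_true; rewrite /final_ok.
move=> /allP /(_ i); rewrite mem_iota add0n => /(_ Hi2).
move=> /allP /(_ j); rewrite mem_iota add0n => /(_ Hj2).
move=> /allP /(_ k); rewrite mem_iota add0n => /(_ Hk2).
rewrite Hc /= => Hok.
apply: (CS (rels := RELS)) Hok; first exact: hrels_all.
have Hin : forall a, 0 < a -> a < 8 -> inr a && inr (a + 7).
  move=> a H1 H2; rewrite /inr H1 addn_gt0 H1 /=.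
  have -> : 15 = 8 + 7 by [].
  by rewrite ltn_add2r (ltn_trans H2).
rewrite /okw /tgt /=.
by case/andP: (Hin _ Hi1 Hi2) => -> ->; case/andP: (Hin _ Hj1 Hj2) => -> ->;
  case/andP: (Hin _ Hk1 Hk2) => -> ->.
Qed.

Lemma tt7 : tt 7 = t.
Proof. by rewrite /TS.tt /= gconj1. Qed.

Lemma T_act w p : inr p -> gconj (tt p) (evalw x y w) = tt (actw p w).
Proof.
elim: w p => [|b w IH] p Hp /=; first by rewrite gconj1.
rewrite gconj_mul; case: b.
  have := @Tlem 2 p erefl Hp; rewrite /= => ->.
  apply: IH; exact: (@actL_inr 2 p).
have := @Tlem 0 p erefl Hp; rewrite /= => ->.
apply: IH; exact: (@actL_inr 0 p).
Qed.
End Main.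

Lemma assoc6 (G : group) (a b c d f g : G) :
  gmul (gmul (gmul a b) (gmul c d)) (gmul f g) =
  gmul a (gmul b (gmul c (gmul d (gmul f (gmul g (gone G)))))).
Proof. by rewrite Gmul1 !gmulA. Qed.

Theorem lemma3p4 (G : group) (x y t : G) :
  GG_relations x y t ->
  forall i j k : nat, collinear i j k ->
  forall wi wi' wj wj' wk wk' : seq bool,
    actw 7 wi = i -> actw 7 wi' = i + 7 ->
    actw 7 wj = j -> actw 7 wj' = j + 7 ->
    actw 7 wk = k -> actw 7 wk' = k + 7 ->
    let T w := gconj t (evalw x y w) in
    gmul (gmul (gmul (T wi) (T wi')) (gmul (T wj) (T wj')))
         (gmul (T wk) (T wk')) = gone G.
Proof.
move=> HG i j k Hc wi wi' wj wj' wk wk' Ei Ei' Ej Ej' Ek Ek' T.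
have HT : forall w, T w = TS.tt x y t cwf (actw 7 w).
  move=> w; rewrite /T -{1}(tt7 x y t) (T_act HG) //.
rewrite !HT Ei Ei' Ej Ej' Ek Ek' assoc6.
exact: (main_sem HG Hc).
Qed.
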